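(* Let $p$ be an odd prime, $n$ a positive integer, $q=p^n$, and let $f$ be a planar function on $\mathbb F_{q^2}$. Let $\theta\in\mathbb F_{q^2}^*$ be such that $\theta^{q+1}$ is a nonsquare in $\mathbb F_q$, and assume that for every $c\in\mathbb F_{q^2}$, \[\#\{x\in\mathbb F_{q^2}:f(x)=c\}=\#\{y\in\mathbb F_{q^2}:y^2=c\}.\] Then the set $\mathcal U_\theta:=\{(x,t\theta):x\in\mathbb F_{q^2},t\in\mathbb F_q\}\cup\{(\infty)\}$ is a unital in $\Pi(f)$. Furthermore, for such $\theta$, $\mathcal U_\theta$ is a unital in $\Pi(f)$ for each of the following planar functions $f$ on $\mathbb F_{q^2}$: (a) $f(x)=x^2$; (b) $f(x)=x^{p^k+1}$, where $k$ is an integer with $1\le k\le n$ and $2n/\gcd(2n,k)$ odd; (c) $f(x)=x^{(3^k+1)/2}$, where $p=3$ and $\gcd(k,2n)=1$.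
   Context: A function $f:\mathbb F_{q^2}\to\mathbb F_{q^2}$ is planar if for every $a\neq 0$ the map $x\mapsto f(x+a)-f(x)$ is a bijection. For planar $f$, $\Pi(f)$ is the projective plane with points $(x,y)\in\mathbb F_{q^2}^2$ and $(a)$ for $a\in\mathbb F_{q^2}\cup\{\infty\}$, and lines $L_{a,b}=\{(x,f(x+a)-b):x\in\mathbb F_{q^2}\}\cup\{(a)\}$ ($a,b\in\mathbb F_{q^2}$), $N_a=\{(a,y):y\in\mathbb F_{q^2}\}\cup\{(\infty)\}$ ($a\in\mathbb F_{q^2}$), $L_\infty=\{(a):a\in\mathbb F_{q^2}\cup\{\infty\}\}$, incidence being membership. A unital in $\Pi(f)$ is a set of $q^3+1$ points meeting every line in exactly $1$ or $q+1$ points. *)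

(* Defs.v *)
From HB Require Import structures.
From mathcomp Require Import all_boot all_order all_algebra all_field.
Set Implicit Arguments. Unset Strict Implicit. Unset Printing Implicit Defensive.
Import GRing.Theory.
Local Open Scope ring_scope.

Section Plane.
Variable F : finFieldType.

Definition planar (f : F -> F) : Prop :=
  forall a : F, a != 0 -> bijective (fun x => f (x + a) - f x).

(* Points of Pi(f): inl (x,y) = affine point (x,y); inr (Some a) = (a);
   inr None = (infinity). *)
Definition point := ((F * F) + option F)%type.
(* Lines of Pi(f): inl (a,b) = L_{a,b}; inr (Some a) = N_a; inr None = L_infinity. *)
Definition line := ((F * F) + option F)%type.

Definition incident (f : F -> F) (P : point) (L : line) : bool :=
  match L with
  | inl (a, b) =>
      match P with
      | inl (x, y) => y == f (x + a) - b
      | inr (Some a') => a' == a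
      | inr None => false
      end
  | inr (Some a) =>
      match P with
      | inl (x, _) => x == a
      | inr None => true
      | inr (Some _) => false
      end
  | inr None =>
      match P with
      | inl _ => false
      | inr _ => true
      end
  end.

Definition unital (q : nat) (f : F -> F) (U : {set point}) : Prop :=
  #|U| = (q ^ 3).+1 /\
  forall L : line, #|[set P in U | incident f P L]| \in [:: 1%N; q.+1].

Definition subF (q : nat) : {set F} := [set x : F | x ^+ q == x].

Definition U_theta (q : nat) (theta : F) : {set point} :=
  [set P : point |
    match P with
    | inl (x, y) => [exists t in subF q, y == t * theta]
    | inr None => true
    | inr (Some _) => false
    end].

End Plane.

(* Main.v *)
Require Import Defs.
From HB Require Import structures.
From mathcomp Require Import all_boot all_order all_algebra all_field.
From mathcomp Require Import zify ring.
Import GRing.Theory.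
Local Open Scope ring_scope.

Module Helpers.
Set Implicit Arguments. Unset Strict Implicit. Unset Printing Implicit Defensive.
Local Open Scope nat_scope.
Lemma NL1 (n k : nat) : (0 < n)%N -> odd ((2 * n) %/ gcdn (2 * n) k) ->
  (gcdn (2 * k) (2 * n) %| k) && ~~ odd k.
Proof.
move=> n0 ho.
set g := gcdn (2 * n) k.
have g0 : 0 < g by rewrite gcdn_gt0 muln_gt0 n0.
set o := (2 * n) %/ g.
have hgo : 2 * n = g * o by rewrite /o [g * _]mulnC divnK // dvdn_gcdl.
have gk : g %| k by exact: dvdn_gcdr.
have [j hj] : exists j, k = g * j by exists (k %/ g); rewrite [g * _]mulnC divnK.
have ge : ~~ odd g.
  apply/negP => og; have : odd (2 * n) by rewrite hgo oddM og ho.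
  by rewrite oddM.
have ke : ~~ odd k by rewrite hj oddM negb_and ge.
rewrite ke andbT.
set D := gcdn (2 * k) (2 * n).
have gD : g %| D by rewrite dvdn_gcd (dvdn_mull _ gk) dvdn_gcdl.
have [e he] : exists e, D = g * e by exists (D %/ g); rewrite [g * _]mulnC divnK.
have eo : e %| o.
  have : D %| 2 * n by exact: dvdn_gcdr.
  by rewrite he hgo dvdn_pmul2l.
have oe : odd e.
  apply/negPn/negP => ev; have h2 : 2 %| e by rewrite dvdn2.
  by have := dvdn_trans h2 eo; rewrite dvdn2 ho.
have ej : e %| j.
  have : D %| 2 * k by exact: dvdn_gcdl.
  rewrite he hj mulnCA dvdn_pmul2l // => h.
  have c2 : coprime e 2 by rewrite coprimen2 oe.
  by move: h; rewrite Gauss_dvdr.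
have coj : gcdn o j = 1.
  have : g = g * gcdn o j by rewrite muln_gcdr -hgo -hj.
  by move/eqP; rewrite -{1}(muln1 g) eqn_pmul2l // eq_sym => /eqP.
have e1 : e = 1.
  by apply/eqP; rewrite -dvdn1 -coj dvdn_gcd eo ej.
by rewrite he e1 muln1.
Qed.

Lemma NL2 (p k : nat) : odd p -> ~~ odd k -> odd ((p ^ k).+1./2) /\ (p ^ k).+1 = 2 * (p ^ k).+1./2.
Proof.
move=> op ek.
have [h hk] : exists h, k = 2 * h by exists k./2; rewrite -{1}(odd_double_half k) (negbTE ek) add0n -muln2 mulnC.
set s := p ^ h.
have os : odd s by rewrite oddX op orbT.
have [j hj] : exists j, s = 2 * j + 1 by exists s./2; rewrite -{1}(odd_double_half s) os -muln2 mulnC addnC.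
have -> : p ^ k = s * s by rewrite hk mulnC expnM -/s; rewrite expnS expn1.
have -> : (s * s).+1 = 2 * (2 * (j * j + j) + 1) by rewrite hj; nia.
have -> : (2 * (2 * (j * j + j) + 1))./2 = 2 * (j * j + j) + 1 by rewrite mul2n doubleK.
by split => //; rewrite addn1 /= oddM.
Qed.

Lemma NL3 (k : nat) : odd k -> exists u, [/\ odd u, (3 ^ k).+1 %/ 2 = 2 * u & (3 ^ k).+1 = 4 * u].
Proof.
move=> ok.
have [h hk] : exists h, k = 2 * h + 1 by exists k./2; rewrite -{1}(odd_double_half k) ok -muln2 mulnC addnC.
have [t ht] : exists t, 9 ^ h = 8 * t + 1.
  elim: h {hk} => [|h [t ht]]; first by exists 0.
  by exists (9 * t + 1); rewrite expnS ht; lia.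
have e3 : 3 ^ k = 3 * (8 * t + 1) by rewrite hk expnD expn1 expnM -ht mulnC.
exists (6 * t + 1); split.
- by rewrite addn1 /= oddM.
- rewrite e3; lia.
- rewrite e3; lia.
Qed.
Local Open Scope ring_scope.
Lemma card_split (T1 T2 : finType) (B : {set (T1 + T2)%type}) :
  #|B| = (#|[set z | inl T2 z \in B]| + #|[set w | inr T1 w \in B]|)%N.
Proof.
rewrite -!sum1_card big_sumType /=; congr (_ + _)%N; apply: eq_bigl => z; by rewrite !inE.
Qed.

Lemma card_graph (T1 T2 : finType) (h : T1 -> T2) (X : pred T1) :
  #|[set z : T1 * T2 | (z.2 == h z.1) && X z.1]| = #|[set x | X x]|.
Proof.
have -> : [set z : T1 * T2 | (z.2 == h z.1) && X z.1] = (fun x => (x, h x)) @: [set x | X x].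
  apply/setP => -[x y]; rewrite inE /=; apply/idP/imsetP => [/andP[/eqP -> Xx]|[x' Xx' [-> ->]]].
    by exists x; rewrite ?inE.
  by rewrite inE in Xx'; rewrite eqxx.
by rewrite card_imset // => x1 x2 [].
Qed.

Section Aux.
Variable F : finFieldType.

Lemma root_bound (m : nat) (c : F) : (0 < m)%N -> (#|[set x : F | x ^+ m == c]| <= m)%N.
Proof.
move=> m0; rewrite cardE -ltnS -(size_XnsubC c m0); apply: max_poly_roots.
- by rewrite -size_poly_eq0 size_XnsubC.
- by apply/allP => x; rewrite mem_enum inE => /eqP hx; rewrite rootE !hornerE hx subrr.
- exact: enum_uniq.
Qed.

Lemma GL (D : {set F}) (m l : nat) : (0 < m)%N -> (0 < l)%N -> #|D| = (m * l)%N ->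
  (forall x, x \in D -> (x ^+ m) ^+ l = 1) ->
  #|[set a : F | a ^+ l == 1]| = l /\
  forall a : F, a ^+ l = 1 -> #|[set x in D | x ^+ m == a]| = m.
Proof.
move=> m0 l0 hD hDR.
set R := [set a : F | a ^+ l == 1].
set f := fun a => #|[set x in D | x ^+ m == a]|.
have hR : (#|R| <= l)%N by apply: root_bound.
have hf : forall a, (f a <= m)%N.
  move=> a; apply: leq_trans (root_bound a m0); apply: subset_leq_card.
  by apply/subsetP => x; rewrite !inE => /andP[].
have hsum : \sum_(a in R) f a = (m * l)%N.
  rewrite -hD -sum1_card [RHS](partition_big (fun x => x ^+ m) (mem R)).
    by apply: eq_bigr => a _; rewrite /f -sum1_card; apply: eq_bigl => x; rewrite !inE.
  by move=> x xD; have hx : x ^+ m \in R by rewrite inE (hDR x xD).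
have key : forall a0, a0 \in R -> f a0 = m.
  move=> a0 a0R; apply/eqP; rewrite eqn_leq hf /=.
  move: hsum; rewrite (bigD1 a0) //=.
  have h1 : (\sum_(a in R | a != a0) f a <= \sum_(a in R | a != a0) m)%N by apply: leq_sum.
  have h2 : (m + \sum_(a in R | a != a0) m = #|R| * m)%N.
    by rewrite -sum_nat_const (bigD1 a0 a0R).
  have h3 : (#|R| * m <= l * m)%N by rewrite leq_mul2r hR orbT.
  move=> hs; move: h1 h2 h3 hs.
  move: (\sum_(a in R | a != a0) f a) (\sum_(a in R | a != a0) m) => S1 S2.
  rewrite (mulnC l m); move: (#|R| * m)%N (m * l)%N => X Y; lia.
split.
  apply/eqP; rewrite eqn_leq hR /=.
  have : \sum_(a in R) f a = \sum_(a in R) m by apply: eq_bigr => a aR; rewrite key.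
  rewrite hsum sum_nat_const => h. 
  have : (m * l = m * #|R|)%N by rewrite h mulnC.
  by move/eqP; rewrite eqn_mul2l gtn_eqF //= => /eqP ->.
by move=> a ha; apply: key; rewrite inE ha.
Qed.

Lemma PG (z : F) (a b : nat) : (0 < a)%N -> z ^+ a = 1 -> z ^+ b = 1 -> z ^+ (gcdn a b) = 1.
Proof.
move=> a0 za zb; have [x _ /dvdnP[c hc]] := Bezoutl b a0.
have : z ^+ (gcdn a b + x * b) = 1 by rewrite hc mulnC exprM za expr1n.
by rewrite exprD mulnC exprM zb expr1n mulr1.
Qed.

Lemma FG_iter (z : F) (r a c : nat) : z ^+ (r ^ a) = z -> z ^+ (r ^ (a * c)) = z.
Proof.
move=> h; elim: c => [|c IH]; first by rewrite muln0 expn0 expr1.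
by rewrite mulnS expnD exprM h IH.
Qed.

Lemma FG (z : F) (r a b : nat) : (0 < a)%N -> z ^+ (r ^ a) = z -> z ^+ (r ^ b) = z ->
  z ^+ (r ^ (gcdn a b)) = z.
Proof.
move=> a0 za zb; have [x _ /dvdnP[c hc]] := Bezoutl b a0.
have : z ^+ (r ^ (gcdn a b + x * b)) = z by rewrite hc mulnC FG_iter.
by rewrite expnD mulnC exprM (mulnC x) FG_iter.
Qed.

Lemma pow_fiber (u : nat) : (0 < u)%N -> (forall z : F, z != 0 -> z ^+ u = 1 -> z = 1) ->
  forall c, #|[set x : F | (x ^+ u) ^+ 2 == c]| = #|[set y : F | y ^+ 2 == c]|.
Proof.
move=> u0 hu c.
have inj : injective (fun x : F => x ^+ u).
  move=> x y /= hxy; have [y0|y0] := eqVneq y 0.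
    by move: hxy; rewrite y0 expr0n gtn_eqF //= => /eqP; rewrite expf_eq0 u0 /= => /eqP.
  have : (x / y) ^+ u = 1 by rewrite exprMn exprVn hxy mulfV // expf_eq0 negb_and y0 orbT.
  have [->|x0] := eqVneq x 0.
    by rewrite mul0r expr0n gtn_eqF // => /eqP; rewrite eq_sym oner_eq0.
  move=> /(hu _); rewrite mulf_eq0 invr_eq0 negb_or x0 y0 => /(_ isT) h.
  by apply: (mulIf (invr_neq0 y0)); rewrite h mulfV.
have -> : [set x : F | (x ^+ u) ^+ 2 == c] = (fun x => x ^+ u) @^-1: [set y : F | y ^+ 2 == c].
  by apply/setP => x; rewrite !inE.
exact: card_preimset.
Qed.

Lemma frobN_gen (q : nat) (hq : (0 < q)%N) (hfrob : forall x y : F, (x + y) ^+ q = x ^+ q + y ^+ q)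
  (x : F) : (- x) ^+ q = - x ^+ q.
Proof.
have := hfrob x (- x); rewrite subrr expr0n gtn_eqF //= => /eqP.
by rewrite eq_sym addrC addr_eq0 => /eqP.
Qed.

Section Q.
Variable q : nat.
Hypothesis hF : #|F| = (q ^ 2)%N.
Hypothesis hq1 : (1 < q)%N.
Hypothesis hqodd : odd q.
Hypothesis hfrob : forall x y : F, (x + y) ^+ q = x ^+ q + y ^+ q.
Hypothesis h2 : (2%:R : F) != 0.

Lemma xqq (x : F) : (x ^+ q) ^+ q = x.
Proof. by rewrite -exprM -[(q * q)%N]/(q ^ 2)%N -hF expf_card. Qed.

Lemma frobN (x : F) : (- x) ^+ q = - x ^+ q.
Proof. by apply: frobN_gen; [lia | exact: hfrob]. Qed.

Lemma frobB (x y : F) : (x - y) ^+ q = x ^+ q - y ^+ q.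
Proof. by rewrite hfrob frobN. Qed.

Lemma m1n1 : (-1 : F) != 1.
Proof.
apply/eqP => h; move: h2; rewrite -[2%N]/(1 + 1)%N natrD -{1}h addNr eqxx //.
Qed.

Lemma nz_pow (x : F) : x != 0 -> x ^+ ((q.+1) * (q.-1)) = 1.
Proof.
move=> x0; apply: (mulIf x0); rewrite mul1r -exprSr.
have -> : ((q.+1 * q.-1).+1 = q * q)%N by rewrite -(prednK (ltnW hq1)) /=; lia.
by rewrite exprM xqq.
Qed.

Definition Dst := [set x : F | x != 0].

Lemma normGL : #|[set a : F | a ^+ q.-1 == 1]| = q.-1 /\
  forall a : F, a ^+ q.-1 = 1 -> #|[set x in Dst | x ^+ q.+1 == a]| = q.+1.
Proof.
apply: GL => //; first by lia.
- have -> : Dst = [set~ 0] by apply/setP => x; rewrite !inE.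
  rewrite cardsC1 hF; lia.
- by move=> x; rewrite inE => x0; rewrite -exprM nz_pow.
Qed.

Lemma subF_iff (x : F) : x != 0 -> (x ^+ q == x) = (x ^+ q.-1 == 1).
Proof.
move=> x0; have e : x ^+ q = x ^+ q.-1 * x by rewrite -exprSr prednK //; lia.
rewrite e; apply/eqP/eqP => [h|->]; last by rewrite mul1r.
by apply: (mulIf x0); rewrite mul1r.
Qed.

Lemma card_K : #|subF F q| = q.
Proof.
have -> : subF F q = 0 |: [set a : F | a ^+ q.-1 == 1].
  apply/setP => x; rewrite !inE; have [->|x0] := eqVneq x 0.
    rewrite expr0n gtn_eqF /=; [by rewrite eqxx | lia].
  by rewrite subF_iff.
rewrite cardsU1 (proj1 normGL) inE expr0n.
have -> : (q.-1 == 0)%N = false by apply/negbTE; lia.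
rewrite eq_sym oner_eq0 /=; lia.
Qed.

Lemma half2 : (2 * q.-1./2 = q.-1)%N.
Proof.
have := odd_double_half q.-1; have := hqodd; rewrite -(prednK (ltnW hq1)) /=.
by move/negbTE => ->; rewrite add0n -muln2 mulnC.
Qed.

Lemma sq_in_K (a : F) : a != 0 -> a ^+ q = a -> a ^+ (q.-1./2) = 1 ->
  exists2 t, t \in subF F q & t ^+ 2 = a.
Proof.
move=> a0 aq ah.
have hodd1 : (q.-1 = 2 * q.-1./2)%N by rewrite half2.
have [_ G] := @GL [set x : F | x ^+ q.-1 == 1] 2 (q.-1./2) isT ltac:(lia)
  ltac:(by rewrite (proj1 normGL) -hodd1)
  ltac:(by move=> x; rewrite inE -exprM -hodd1 => /eqP).
have := G a ah; move=> hc.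
have : (0 < 2)%N by []. rewrite -{1}hc.
case/card_gt0P => t; rewrite !inE => /andP[t1 /eqP t2]; exists t; last by [].
rewrite inE subF_iff //; apply/eqP => t0; move: t1; rewrite t0 expr0n.
have -> : (q.-1 == 0)%N = false by apply/negbTE; lia.
by rewrite eq_sym oner_eq0.
Qed.

Lemma gamma_prop (th : F) : th != 0 ->
  ~ (exists2 t : F, t \in subF F q & t ^+ 2 = th ^+ q.+1) ->
  (th ^+ (q.-1./2)) ^+ q.+1 = -1.
Proof.
move=> th0 hns; set a := th ^+ q.+1.
have a0 : a != 0 by rewrite expf_eq0 negb_and th0 orbT.
have aq : a ^+ q = a by rewrite /a exprAC !exprS xqq mulrC.
rewrite exprAC -/a.
have r2 : (a ^+ q.-1./2) ^+ 2 = 1.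
  rewrite -exprM mulnC.
  rewrite half2.
  by apply/eqP; rewrite -subF_iff // aq.
move/eqP: r2; rewrite sqrf_eq1 => /orP[/eqP r1|/eqP //].
by case: (hns (sq_in_K a0 aq r1)).
Qed.


Lemma P_iff (th w : F) : th != 0 ->
  [exists t in subF F q, w == t * th] = (th ^+ q * w == th * w ^+ q).
Proof.
move=> th0; apply/existsP/eqP => [[t /andP[tK /eqP ->]]|h].
  move: tK; rewrite inE => /eqP tq; rewrite exprMn tq; ring.
have thq0 : th ^+ q != 0 by rewrite expf_eq0 negb_and th0 orbT.
exists (w / th); rewrite inE; apply/andP; split; last by rewrite divfK.
have he : w ^+ q = th ^+ q * w / th by rewrite h; field.
by rewrite exprMn exprVn he; apply/eqP; field; rewrite th0 thq0.
Qed.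

Lemma phi_inj (g : F) : g ^+ q.+1 = -1 -> injective (fun y => y ^+ q + g * y).
Proof.
move=> hg y1 y2 /eqP; rewrite -subr_eq0.
have -> : y1 ^+ q + g * y1 - (y2 ^+ q + g * y2) = (y1 - y2) ^+ q + g * (y1 - y2).
  by rewrite frobB; ring.
move=> hd0; apply/eqP; rewrite -subr_eq0; move: hd0; move: (y1 - y2) => d.
apply: contraTT => d0.
have hd : d ^+ q = d ^+ q.-1 * d by rewrite -exprSr prednK //; lia.
rewrite hd -mulrDl mulf_eq0 negb_or d0 andbT.
apply/negP; rewrite addr_eq0 => /eqP hd1.
have := nz_pow d0; rewrite mulnC exprM hd1.
have -> : (- g) ^+ q.+1 = g ^+ q.+1 by rewrite exprS frobN exprS; ring.
by rewrite hg => /eqP; rewrite (negbTE m1n1).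
Qed.

Lemma main_count (th g : F) : th != 0 -> g ^+ 2 = th ^+ q.-1 -> g ^+ q.+1 = -1 ->
  forall b, #|[set y : F | [exists t in subF F q, y ^+ 2 - b == t * th]]| \in [:: 1%N; q.+1].
Proof.
move=> th0 hg2 hg b.
have g0 : g != 0.
  apply/eqP => g0; move: hg; rewrite g0 expr0n /= => /eqP.
  by rewrite eq_sym oppr_eq0 oner_eq0.
have hgq : g ^+ q = - g^-1.
  by apply: (mulfI g0); rewrite -exprS hg; field.
set e := g * b + g ^+ q * b ^+ q.
have hset : [set y : F | [exists t in subF F q, y ^+ 2 - b == t * th]] =
    (fun y => y ^+ q + g * y) @^-1: [set w | w ^+ q.+1 == e].
  apply/setP => y; rewrite !inE P_iff //.
  have thq : th ^+ q = g ^+ 2 * th by rewrite hg2 -exprSr prednK //; lia.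
  rewrite thq frobB exprAC [(_ + _) ^+ q.+1]exprS hfrob exprMn xqq /e hgq.
  move: (y ^+ q) (b ^+ q) => u bq.
  rewrite -subr_eq0 -[RHS]subr_eq0.
  have -> : g ^+ 2 * th * (y ^+ 2 - b) - th * (u ^+ 2 - bq) =
     (th * g) * ((u + g * y) * (y + - g^-1 * u) - (g * b + - g^-1 * bq)).
    by field.
  by rewrite mulf_eq0 mulf_eq0 (negbTE th0) (negbTE g0).
rewrite hset card_preimset; last exact: phi_inj.
have [->|e0] := eqVneq e 0.
  have -> : [set w : F | w ^+ q.+1 == 0] = [set 0].
    by apply/setP => w; rewrite !inE expf_eq0.
  by rewrite cards1.
have eq : e ^+ q = e by rewrite /e hfrob !exprMn !xqq addrC.
have e1 : e ^+ q.-1 = 1 by apply/eqP; rewrite -subF_iff // eq.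
have -> : [set w : F | w ^+ q.+1 == e] = [set x in Dst | x ^+ q.+1 == e].
  apply/setP => w; rewrite !inE; have [->|//] := eqVneq w 0.
  by rewrite expr0n /= eq_sym (negbTE e0).
by rewrite (proj2 normGL _ e1) !inE eqxx orbT.
Qed.


Lemma fiber_transfer (Q : pred F) (f g : F -> F) :
  (forall c, #|[set x | f x == c]| = #|[set y | g y == c]|) ->
  #|[set x | Q (f x)]| = #|[set y | Q (g y)]|.
Proof.
move=> h.
have E : forall (h' : F -> F), #|[set x | Q (h' x)]| = (\sum_(c | Q c) #|[set x | h' x == c]|)%N.
  move=> h'; rewrite -sum1_card (partition_big h' Q) /=; last by move=> x; rewrite inE.
  apply: eq_bigr => c Qc; rewrite -sum1_card; apply: eq_bigl => x; rewrite !inE.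
  by case: (h' x =P c) => [->|]; rewrite ?andbF // Qc.
by rewrite !E; apply: eq_bigr => c _; exact: h.
Qed.

Definition Kth (th : F) := [set y : F | [exists t in subF F q, y == t * th]].

Lemma card_Kth th : th != 0 -> #|Kth th| = q.
Proof.
move=> th0; have -> : Kth th = (fun t => t * th) @: subF F q.
  apply/setP => y; rewrite inE; apply/existsP/imsetP => [[t /andP[tK /eqP ->]]|[t tK ->]].
    by exists t.
  by exists t; rewrite tK eqxx.
by rewrite card_imset ?card_K //; exact: mulIf.
Qed.

Lemma unital_gen (th g : F) (f : F -> F) : th != 0 -> g ^+ 2 = th ^+ q.-1 -> g ^+ q.+1 = -1 ->
  (forall c : F, #|[set x : F | f x == c]| = #|[set y : F | y ^+ 2 == c]|) ->
  unital q f (U_theta q th).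
Proof.
move=> th0 hg2 hg hfib; split.
  rewrite card_split.
  have -> : [set z | inl z \in U_theta q th] = setX [set: F] (Kth th).
    by apply/setP => -[x y]; rewrite !inE.
  have -> : [set w | inr (F * F)%type w \in U_theta q th] = [set None].
    by apply/setP => -[a|]; rewrite !inE.
  rewrite cardsX cardsT hF card_Kth // cards1 !expnS expn0; lia.
case=> [[a b]|[a|]]; rewrite card_split.
- have -> : [set z | inl (option F) z \in [set P in U_theta q th | incident f P (inl (a, b))]]
     = [set z : F * F | (z.2 == f (z.1 + a) - b) && [exists t in subF F q, f (z.1 + a) - b == t * th]].
    apply/setP => -[x y]; rewrite !inE /= andbC.
    by case: eqVneq => [->|].
  have -> : [set w | inr (F * F)%type w \in [set P in U_theta q th | incident f P (inl (a, b))]] = set0.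
    by apply/setP => -[a'|]; rewrite !inE.
  rewrite (card_graph (fun x => f (x + a) - b) (fun x => [exists t in subF F q, f (x + a) - b == t * th])) cards0 addn0.
  have -> : [set x | [exists t in subF F q, f (x + a) - b == t * th]] =
     (fun x => x + a) @^-1: [set x | [exists t in subF F q, f x - b == t * th]].
    by apply/setP => x; rewrite !inE.
  rewrite card_preimset; last exact: addIr.
  rewrite (fiber_transfer (fun c => [exists t in subF F q, c - b == t * th]) hfib).
  exact: (main_count th0 hg2 hg b).
- have -> : [set z | inl (option F) z \in [set P in U_theta q th | incident f P (inr (Some a))]]
     = setX [set a] (Kth th).
    apply/setP => -[x y]; rewrite !inE /= andbC.
    by [].
  have -> : [set w | inr (F * F)%type w \in [set P in U_theta q th | incident f P (inr (Some a))]] = [set None].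
    by apply/setP => -[a'|]; rewrite !inE.
  by rewrite cardsX !cards1 card_Kth // mul1n addn1 !inE eqxx orbT.
- have -> : [set z | inl (option F) z \in [set P in U_theta q th | incident f P (inr None)]] = set0.
    by apply/setP => -[x y]; rewrite !inE andbF.
  have -> : [set w | inr (F * F)%type w \in [set P in U_theta q th | incident f P (inr None)]] = [set None].
    by apply/setP => -[a'|]; rewrite !inE.
  by rewrite cards0 cards1.
Qed.
Lemma unital_final (th : F) (f : F -> F) : th != 0 ->
  ~ (exists2 t : F, t \in subF F q & t ^+ 2 = th ^+ q.+1) ->
  (forall c : F, #|[set x : F | f x == c]| = #|[set y : F | y ^+ 2 == c]|) ->
  unital q f (U_theta q th).
Proof.
move=> th0 hns hfib; apply: (@unital_gen th (th ^+ q.-1./2)) => //.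
  by rewrite -exprM mulnC half2.
exact: gamma_prop.
Qed.
End Q.
End Aux.

End Helpers.
Import Helpers.

Theorem theorem2p4 (F : finFieldType) (p n : nat) (hp : prime p) (hodd : odd p)
  (hn : (0 < n)%N) (hF : #|F| = ((p ^ n) ^ 2)%N)
  (theta : F) (htheta0 : theta != 0)
  (hns : ~ (exists2 t : F, t \in subF F (p ^ n) & t ^+ 2 = theta ^+ (p ^ n).+1)) :
  (forall f : F -> F, planar f ->
     (forall c : F, #|[set x : F | f x == c]| = #|[set y : F | y ^+ 2 == c]|) ->
     unital (p ^ n) f (U_theta (p ^ n) theta))
  /\ unital (p ^ n) (fun x : F => x ^+ 2) (U_theta (p ^ n) theta)
  /\ (forall k : nat, (1 <= k <= n)%N -> odd ((2 * n) %/ gcdn (2 * n) k) ->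
        unital (p ^ n) (fun x : F => x ^+ (p ^ k).+1) (U_theta (p ^ n) theta))
  /\ (p = 3%N -> forall k : nat, gcdn k (2 * n) = 1%N ->
        unital (p ^ n) (fun x : F => x ^+ ((3 ^ k).+1 %/ 2)) (U_theta (p ^ n) theta)).
Proof.
have hp1 := prime_gt1 hp.
have hq1 : (1 < p ^ n)%N by have := leq_pexp2l (ltnW hp1) hn; rewrite expn1; lia.
have hqodd : odd (p ^ n) by rewrite oddX hodd orbT.
have hpc : p \in [pchar F] by apply: (@card_finPcharP _ p (n * 2)) => //; rewrite hF expnM.
have hfrob : forall x y : F, (x + y) ^+ (p ^ n) = x ^+ (p ^ n) + y ^+ (p ^ n).
  by move=> x y; apply: exprDn_pchar; rewrite pnatX (pnatE _ hp) hpc.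
have h2 : (2%:R : F) != 0.
  apply/eqP => h; have := pcharf0 hpc; have e := odd_double_half p; rewrite hodd in e.
  rewrite -e natrD -muln2 natrM h mulr0 addr0 /= => /eqP; by rewrite oner_eq0.
have U := unital_final hF hq1 hqodd hfrob h2 htheta0 hns.
have z2n : forall z : F, z ^+ (p ^ (2 * n)) = z.
  by move=> z; rewrite mulnC expnM -hF expf_card.
split; first by move=> f _ hfib; exact: U.
split; first by apply: U => c.
split.
  move=> k /andP[k1 kn] ho.
  have /andP[hdk kev] := NL1 hn ho.
  have [uo hu] := NL2 hodd kev.
  move: uo hu; set u := (p ^ k).+1./2 => uo hu.
  apply: U => c.
  have -> : [set x : F | x ^+ (p ^ k).+1 == c] = [set x : F | (x ^+ u) ^+ 2 == c].
    by apply/setP => x; rewrite !inE -exprM mulnC -hu.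
  apply: pow_fiber; first by case: (u) uo.
  move=> z z0 zu.
  have zk : z ^+ (p ^ k).+1 = 1 by rewrite hu mulnC exprM zu expr1n.
  have zinv : z ^+ (p ^ k) = z^-1.
    by apply: (mulIf z0); rewrite -exprSr zk mulVf.
  have z2k : z ^+ (p ^ (2 * k)) = z.
    by rewrite mulnC expnM expnS expn1 exprM zinv exprVn zinv invrK.
  have zg : z ^+ (p ^ gcdn (2 * k) (2 * n)) = z by apply: (FG _ z2k (z2n z)); lia.
  have zk' : z ^+ (p ^ k) = z.
    by have [cc hc] := dvdnP hdk; rewrite hc mulnC FG_iter.
  have zsq : z ^+ 2 = 1 by rewrite expr2 -{1}zk' zinv mulVf.
  have := @PG _ z 2 u isT zsq zu; move: (coprime2n u); rewrite uo /coprime => /eqP ->.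
  by rewrite expr1.
move=> hp3 k hk; subst p.
have ok : odd k.
  apply: contraT => ek; have : (2 %| gcdn k (2 * n))%N by rewrite dvdn_gcd dvdn2 ek dvdn_mulr.
  by rewrite hk.
have [u [uo hm h4]] := NL3 ok.
apply: U => c.
have -> : [set x : F | x ^+ ((3 ^ k).+1 %/ 2) == c] = [set x : F | (x ^+ u) ^+ 2 == c].
  by apply/setP => x; rewrite !inE -exprM mulnC -hm.
apply: pow_fiber; first by case: (u) uo.
move=> z z0 zu.
have zk : z ^+ (3 ^ k).+1 = 1 by rewrite h4 mulnC exprM zu expr1n.
have zinv : z ^+ (3 ^ k) = z^-1.
  by apply: (mulIf z0); rewrite -exprSr zk mulVf.
have z2k : z ^+ (3 ^ (2 * k)) = z.
  by rewrite mulnC expnM expnS expn1 exprM zinv exprVn zinv invrK.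
have zg : z ^+ (3 ^ gcdn (2 * k) (2 * n)) = z by apply: (FG _ z2k (z2n z)); lia.
have g2 : gcdn (2 * k) (2 * n) = 2%N.
  rewrite -muln_gcdr; apply/eqP; rewrite -[X in _ == X]muln1 eqn_pmul2l //; apply/eqP.
  apply/eqP; rewrite -dvdn1 -hk dvdn_gcd dvdn_gcdl /=.
  exact: (dvdn_trans (dvdn_gcdr k n) (dvdn_mull 2 (dvdnn n))).
rewrite g2 in zg.
have [h hk2] : exists h, k = (2 * h + 1)%N by exists k./2; rewrite -{1}(odd_double_half k) ok -muln2 mulnC addnC.
have z3 : z ^+ (3 ^ k) = z ^+ 3 by rewrite hk2 expnD expn1 exprM FG_iter.
have z4 : z ^+ 4 = 1 by rewrite -[4%N]/(3 + 1)%N exprD -z3 zinv expr1 mulVf.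
have c4 : coprime 4 u by rewrite -[4%N]/(2 ^ 2)%N coprime_pexpl // coprime2n.
have := @PG _ z 4 u isT z4 zu; move/eqP: c4 => ->.
by rewrite expr1.
Qed.
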